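(* Let $1\le p\le\infty$, $\mathbb{D}=\{z\in\mathbb{C}:|z|<1\}$, $a\in\mathbb{D}$, and $T_a(z)=\frac{z-a}{1-\overline{a}z}$. Then $T_a:(\mathbb{D},b_{\mathbb{D},p})\to(\mathbb{D},b_{\mathbb{D},p})$ is $L$-bilipschitz with $L=\frac{1+|a|}{1-|a|}$, i.e. for all $z_1,z_2\in\mathbb{D}$, \[ \frac{1-|a|}{1+|a|}\,b_{\mathbb{D},p}(z_1,z_2)\le b_{\mathbb{D},p}(T_a(z_1),T_a(z_2))\le\frac{1+|a|}{1-|a|}\,b_{\mathbb{D},p}(z_1,z_2). \]
   Context: For $z_1,z_2\in\mathbb{D}$ and $1\le p<\infty$, $b_{\mathbb{D},p}(z_1,z_2)=\sup_{z\in\partial\mathbb{D}}\frac{|z_1-z_2|}{\sqrt[p]{|z_1-z|^p+|z-z_2|^p}}$, and $b_{\mathbb{D},\infty}(z_1,z_2)=\sup_{z\in\partial\mathbb{D}}\frac{|z_1-z_2|}{\max\{|z_1-z|,|z_2-z|\}}$. *)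

(* Defs.v *)
From mathcomp Require Import all_boot all_order all_algebra.
From mathcomp Require Import all_classical all_reals all_analysis.
From mathcomp Require Import complex.
Set Implicit Arguments. Unset Strict Implicit. Unset Printing Implicit Defensive.
Import Order.TTheory GRing.Theory Num.Theory.
Local Open Scope ring_scope.
Local Open Scope classical_set_scope.

Section Defs.
Variable R : realType.

Definition cabs (z : R[i]) : R := ComplexField.Normc.normc z.

Definition unit_disk : set R[i] := [set z | cabs z < 1].
Definition unit_circle : set R[i] := [set z | cabs z = 1].

Definition bD_fin (r : R) (z1 z2 : R[i]) : R :=
  sup [set cabs (z1 - z2) /
            powR (powR (cabs (z1 - z) ) r + powR (cabs (z - z2)) r) r^-1
      | z in unit_circle].

Definition bD_inf (z1 z2 : R[i]) : R :=
  sup [set cabs (z1 - z2) / Num.max (cabs (z1 - z)) (cabs (z2 - z))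
      | z in unit_circle].

(* b_{D,p} for p in [1, +oo] given as an extended real; the -oo case is junk *)
Definition bD (p : \bar R) (z1 z2 : R[i]) : R :=
  match p with
  | r%:E => bD_fin r z1 z2
  | +oo%E => bD_inf z1 z2
  | -oo%E => 0
  end.

Definition mobT (a z : R[i]) : R[i] := (z - a) / (1 - (conjc a) * z).
End Defs.

(* Main.v *)
Require Import Defs.
From mathcomp Require Import all_boot all_order all_algebra.
From mathcomp Require Import all_classical all_reals all_analysis.
From mathcomp Require Import complex.
From mathcomp Require Import ring lra.
Import Order.TTheory GRing.Theory Num.Theory.
Local Open Scope ring_scope.

Section S.
Variable R : realType.
Implicit Types z w a b : R[i].

Lemma cabsE (x y : R) : cabs (x +i* y)%C = Num.sqrt (x ^+ 2 + y ^+ 2).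
Proof. by []. Qed.

Lemma cabs_ge0 z : 0 <= cabs z.
Proof. by case: z => x y; rewrite cabsE sqrtr_ge0. Qed.

Lemma cabsM z w : cabs (z * w) = cabs z * cabs w.
Proof. exact: ComplexField.Normc.normcM. Qed.

Lemma cabsV z : cabs (z^-1) = (cabs z)^-1.
Proof. exact: ComplexField.Normc.normcV. Qed.

Lemma cabsN z : cabs (- z) = cabs z.
Proof. exact: normcN. Qed.

Lemma cabsD z w : cabs (z + w) <= cabs z + cabs w.
Proof. exact: le_normcD. Qed.

Lemma cabs1 : cabs (1 : R[i]) = 1.
Proof. exact: ComplexField.Normc.normc1. Qed.

Lemma cabs_eq0 z : cabs z = 0 -> z = 0.
Proof. exact: ComplexField.Normc.eq0_normc. Qed.

Lemma cabsB z w : cabs (z - w) = cabs (w - z).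
Proof. by rewrite -cabsN opprB. Qed.

Lemma cabs_conj z : cabs (conjc z) = cabs z.
Proof. by case: z => x y; rewrite /cabs /= sqrrN. Qed.

Lemma cabs_lb z w : cabs z - cabs w <= cabs (z - w).
Proof. have := cabsD (z - w) w; rewrite subrK; lra. Qed.

Lemma cabs_sq (x y : R) : cabs (x +i* y)%C ^+ 2 = x ^+ 2 + y ^+ 2.
Proof. by rewrite cabsE sqr_sqrtr // addr_ge0 // sqr_ge0. Qed.

Lemma key_id a z :
  cabs (1 - conjc a * z) ^+ 2 - cabs (z - a) ^+ 2 =
  (1 - cabs a ^+ 2) * (1 - cabs z ^+ 2).
Proof.
case: a => p q; case: z => x y.
rewrite /= !sqr_sqrtr ?addr_ge0 ?sqr_ge0 //; ring.
Qed.
Lemma den_bounds b z : cabs b < 1 -> cabs z <= 1 ->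
  1 - cabs b <= cabs (1 - b * z) /\ cabs (1 - b * z) <= 1 + cabs b.
Proof.
move=> hb hz; have h0 := cabs_ge0 b; have h1 := cabs_ge0 z.
have hbz : cabs (b * z) <= cabs b by rewrite cabsM; nra.
split.
- have := cabs_lb 1 (b * z); rewrite cabs1; lra.
- have := cabsD 1 (- (b * z)); rewrite cabs1 cabsN; lra.
Qed.

Lemma den_gt0 b z : cabs b < 1 -> cabs z <= 1 -> 0 < cabs (1 - b * z).
Proof. move=> hb hz; have [h _] := den_bounds _ _ hb hz; lra. Qed.

Lemma den_neq0 b z : cabs b < 1 -> cabs z <= 1 -> 1 - b * z != 0.
Proof.
move=> hb hz; apply/eqP => h; have := den_gt0 _ _ hb hz; rewrite h.
by rewrite /cabs ComplexField.Normc.normc0 ltxx.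
Qed.

Lemma mob_diff a z w : cabs a < 1 -> cabs z <= 1 -> cabs w <= 1 ->
  mobT a z - mobT a w =
  (z - w) * (1 - conjc a * a) / ((1 - conjc a * z) * (1 - conjc a * w)).
Proof.
move=> ha hz hw.
have ha' : cabs (conjc a) < 1 by rewrite cabs_conj.
have n1 := den_neq0 _ _ ha' hz; have n2 := den_neq0 _ _ ha' hw.
rewrite /mobT; field.
by rewrite n1 n2.
Qed.
Lemma cabs_mob_diff a z w : cabs a < 1 -> cabs z <= 1 -> cabs w <= 1 ->
  cabs (mobT a z - mobT a w) =
  cabs (z - w) * cabs (1 - conjc a * a) /
    (cabs (1 - conjc a * z) * cabs (1 - conjc a * w)).
Proof.
move=> ha hz hw; rewrite mob_diff // cabsM cabsV cabsM cabsM //.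
Qed.

Lemma cabs_sub_circle a z : cabs z = 1 ->
  cabs (1 - conjc a * z) = cabs (z - a).
Proof.
move=> hz; have := key_id a z; rewrite hz expr1n subrr mulr0 => /eqP.
rewrite subr_eq0 => /eqP h.
have h1 := cabs_ge0 (1 - conjc a * z); have h2 := cabs_ge0 (z - a).
by apply/eqP; rewrite -(eqrXn2 (_ : 0 < 2)%N) // h.
Qed.

Lemma mob_circle a z : cabs a < 1 -> cabs z = 1 -> cabs (mobT a z) = 1.
Proof.
move=> ha hz.
have ha' : cabs (conjc a) < 1 by rewrite cabs_conj.
have hz1 : cabs z <= 1 by rewrite hz.
have := den_gt0 _ _ ha' hz1.
rewrite /mobT cabsM cabsV cabs_sub_circle // => hp.
by rewrite divff // gt_eqF.
Qed.

Lemma mob_disk a z : cabs a < 1 -> cabs z < 1 -> cabs (mobT a z) < 1.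
Proof.
move=> ha hz.
have ha' : cabs (conjc a) < 1 by rewrite cabs_conj.
have hp := den_gt0 _ _ ha' (ltW hz).
rewrite /mobT cabsM cabsV ltr_pdivrMr // mul1r.
have := key_id a z.
have h0 := cabs_ge0 a; have h1 := cabs_ge0 z; have h2 := cabs_ge0 (z - a).
have : 0 < (1 - cabs a ^+ 2) * (1 - cabs z ^+ 2) by apply: mulr_gt0; nra.
nra.
Qed.

Lemma mob_inv a z : cabs a < 1 -> cabs z < 1 -> mobT (- a) (mobT a z) = z.
Proof.
move=> ha hz.
have ha' : cabs (conjc a) < 1 by rewrite cabs_conj.
have n1 := den_neq0 _ _ ha' (ltW hz).
have n2 := den_neq0 _ _ ha' (ltW ha).
rewrite /mobT; have -> : conjc (- a) = - conjc a.
  by case: a {ha ha' n1 n2} => x y; apply/eqP; rewrite eq_complex /= !eqxx.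
field.
rewrite n1 /= (_ : _ - _ = 1 - conjc a * a) //; ring.
Qed.
Definition F (Nf : R -> R -> R) z1 z2 z :=
  cabs (z1 - z2) / Nf (cabs (z1 - z)) (cabs (z - z2)).

Section NfSec.
Variable Nf : R -> R -> R.
Hypothesis HNhom : forall c x y : R, 0 < c -> 0 <= x -> 0 <= y -> Nf (c * x) (c * y) = c * Nf x y.
Hypothesis HNmono : forall x y x' y' : R, 0 <= x -> 0 <= y -> x <= x' -> y <= y' -> Nf x y <= Nf x' y'.
Hypothesis HNlb : forall x y : R, 0 <= x -> 0 <= y -> x <= Nf x y.

Lemma d_pos z1 z : cabs z1 < 1 -> cabs z = 1 -> 1 - cabs z1 <= cabs (z1 - z).
Proof. move=> h1 h; rewrite cabsB; have := cabs_lb z z1; lra. Qed.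

Lemma F_bound z1 z2 z : cabs z1 < 1 -> cabs z = 1 ->
  F Nf z1 z2 z <= cabs (z1 - z2) / (1 - cabs z1).
Proof.
move=> h1 h; rewrite /F.
have hd := d_pos _ _ h1 h.
have hN := HNlb _ _ (cabs_ge0 (z1 - z)) (cabs_ge0 (z - z2)).
apply: ler_wpM2l; first exact: cabs_ge0.
rewrite lef_pV2 ?posrE; lra.
Qed.

Lemma F_point a z1 z2 z : cabs a < 1 -> cabs z1 < 1 -> cabs z2 < 1 -> cabs z = 1 ->
  (1 - cabs a) / (1 + cabs a) * F Nf z1 z2 z <=
  F Nf (mobT a z1) (mobT a z2) (mobT a z).
Proof.
move=> ha h1 h2 h.
have ha' : cabs (conjc a) < 1 by rewrite cabs_conj.
have hz : cabs z <= 1 by rewrite h.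
have h1' : cabs z1 <= 1 by apply: ltW.
have h2' : cabs z2 <= 1 by apply: ltW.
rewrite /F !cabs_mob_diff //.
set K := cabs (1 - conjc a * a).
set u := cabs (1 - conjc a * z1).
set v := cabs (1 - conjc a * z2).
set w := cabs (1 - conjc a * z).
set d12 := cabs (z1 - z2); set d1 := cabs (z1 - z); set d2 := cabs (z - z2).
have [hu1 hu2] := den_bounds _ _ ha' (ltW h1).
have [hv1 hv2] := den_bounds _ _ ha' (ltW h2).
have [hw1 hw2] := den_bounds _ _ ha' hz.
have hK : 0 < K by rewrite /K; exact: den_gt0 _ _ ha' (ltW ha).
rewrite cabs_conj in hu1 hu2 hv1 hv2 hw1 hw2.
have h0 := cabs_ge0 a.
have hu : 0 < u by rewrite /u; lra.
have hv : 0 < v by rewrite /v; lra.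
have hw : 0 < w by rewrite /w; lra.
have hd1 : 0 < d1 by rewrite /d1; have := d_pos _ _ h1 h; lra.
have hd2 : 0 <= d2 := cabs_ge0 _.
have hd12 : 0 <= d12 := cabs_ge0 _.
set c := K / (u * v * w).
have hc : 0 < c by rewrite /c divr_gt0 // !mulr_gt0.
have e1 : d1 * K / (u * w) = c * (d1 * v) by rewrite /c; field; rewrite !gt_eqF.
have e2 : d2 * K / (w * v) = c * (d2 * u) by rewrite /c; field; rewrite !gt_eqF.
have e3 : d12 * K / (u * v) = c * (d12 * w) by rewrite /c; field; rewrite !gt_eqF.
rewrite e1 e2 e3 HNhom //; last by rewrite mulr_ge0 // ltW.
  2: by rewrite mulr_ge0 // ltW.
have hw1' : 1 - cabs a <= w by [].
have hu2' : u <= 1 + cabs a by [].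
have hv2' : v <= 1 + cabs a by [].
have hN : d1 <= Nf d1 d2 by apply: HNlb => //; apply: ltW.
have hN' : d1 * v <= Nf (d1 * v) (d2 * u).
  by apply: HNlb; rewrite mulr_ge0 // ltW.
have hM : 0 < 1 + cabs a by lra.
have hNN : Nf (d1 * v) (d2 * u) <= (1 + cabs a) * Nf d1 d2.
  rewrite -HNhom //; last exact: ltW.
  apply: HNmono; [exact: mulr_ge0 (ltW hd1) (ltW hv) | exact: mulr_ge0 hd2 (ltW hu) | nra | nra].
have hNp : 0 < Nf d1 d2 by lra.
have hNp' : 0 < Nf (d1 * v) (d2 * u) by nra.
rewrite (_ : c * (d12 * w) / (c * Nf (d1 * v) (d2 * u)) = d12 * (w / Nf (d1 * v) (d2 * u))); last first.
  by field; rewrite !gt_eqF.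
rewrite (_ : (1 - cabs a) / (1 + cabs a) * (d12 / Nf d1 d2) = d12 * ((1 - cabs a) / ((1 + cabs a) * Nf d1 d2))); last first.
  by field; rewrite !gt_eqF.
apply: ler_wpM2l => //.
rewrite ler_pdivlMr // mulrAC ler_pdivrMr ?mulr_gt0 //.
nra.
Qed.
End NfSec.
Section Sup.
Variable Nf : R -> R -> R.
Hypothesis HNhom : forall c x y : R, 0 < c -> 0 <= x -> 0 <= y -> Nf (c * x) (c * y) = c * Nf x y.
Hypothesis HNmono : forall x y x' y' : R, 0 <= x -> 0 <= y -> x <= x' -> y <= y' -> Nf x y <= Nf x' y'.
Hypothesis HNlb : forall x y : R, 0 <= x -> 0 <= y -> x <= Nf x y.

Definition S z1 z2 := [set F Nf z1 z2 z | z in @unit_circle R]%classic.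

Lemma S_ub z1 z2 : cabs z1 < 1 -> has_ubound (S z1 z2).
Proof.
move=> h1; exists (cabs (z1 - z2) / (1 - cabs z1)) => _ [z hz <-].
exact: F_bound.
Qed.

Lemma S_n0 z1 z2 : (S z1 z2 !=set0)%classic.
Proof. by exists (F Nf z1 z2 1), 1 => //; exact: cabs1. Qed.

Lemma main_ineq a z1 z2 : cabs a < 1 -> cabs z1 < 1 -> cabs z2 < 1 ->
  (1 - cabs a) / (1 + cabs a) * sup (S z1 z2) <= sup (S (mobT a z1) (mobT a z2)).
Proof.
move=> ha h1 h2.
have h0 := cabs_ge0 a.
have hm : 0 < (1 - cabs a) / (1 + cabs a) by apply: divr_gt0; lra.
rewrite -ler_pdivlMl //.
apply: ge_sup; first exact: S_n0.
move=> _ [z hz <-].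
rewrite ler_pdivlMl //.
apply: le_trans (@F_point Nf HNhom HNmono HNlb a z1 z2 z ha h1 h2 hz) _.
apply: ub_le_sup; first exact: S_ub _ (mob_disk _ _ ha h1).
by exists (mobT a z) => //; exact: mob_circle.
Qed.
End Sup.
Definition Nmax (x y : R) := Num.max x y.
Definition Npow (r : R) (x y : R) := powR (powR x r + powR y r) r^-1.

Lemma Nmax_hom (c x y : R) : 0 < c -> 0 <= x -> 0 <= y -> Nmax (c * x) (c * y) = c * Nmax x y.
Proof. by move=> hc _ _; rewrite /Nmax maxr_pMr // ltW. Qed.

Lemma Nmax_mono (x y x' y' : R) : 0 <= x -> 0 <= y -> x <= x' -> y <= y' -> Nmax x y <= Nmax x' y'.
Proof.
move=> _ _ hx hy; rewrite /Nmax ge_max !le_max.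
by rewrite hx hy orbT.
Qed.

Lemma Nmax_lb (x y : R) : 0 <= x -> 0 <= y -> x <= Nmax x y.
Proof. by move=> _ _; rewrite /Nmax le_max lexx. Qed.

Lemma powRK (r x : R) : 1 <= r -> 0 <= x -> powR (powR x r) r^-1 = x.
Proof.
move=> hr hx; rewrite -powRrM divff ?powRr1 //.
by apply: lt0r_neq0; lra.
Qed.

Lemma Npow_hom (r c x y : R) : 1 <= r -> 0 < c -> 0 <= x -> 0 <= y ->
  Npow r (c * x) (c * y) = c * Npow r x y.
Proof.
move=> hr hc hx hy; rewrite /Npow (powRM _ (ltW hc) hx) (powRM _ (ltW hc) hy).
rewrite -mulrDr powRM ?powR_ge0 //; last by rewrite addr_ge0 // powR_ge0.
by rewrite powRK // ltW.
Qed.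

Lemma Npow_mono (r x y x' y' : R) : 1 <= r -> 0 <= x -> 0 <= y -> x <= x' -> y <= y' ->
  Npow r x y <= Npow r x' y'.
Proof.
move=> hr hx hy hxx hyy; rewrite /Npow.
have hr0 : 0 <= r by lra.
have hri : 0 <= r^-1 by rewrite invr_ge0.
apply: (ge0_ler_powR hri); rewrite ?nnegrE ?addr_ge0 ?powR_ge0 //.
apply: lerD; apply: (ge0_ler_powR hr0); rewrite ?nnegrE //; lra.
Qed.

Lemma Npow_lb (r x y : R) : 1 <= r -> 0 <= x -> 0 <= y -> x <= Npow r x y.
Proof.
move=> hr hx hy; rewrite /Npow.
have hri : 0 <= r^-1 by rewrite invr_ge0; lra.
rewrite -{1}(powRK _ _ hr hx).
apply: (ge0_ler_powR hri); rewrite ?nnegrE ?addr_ge0 ?powR_ge0 //.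
by rewrite lerDl powR_ge0.
Qed.
End S.

Lemma final_gen (R : realType) (Nf : R -> R -> R)
  (HNhom : forall c x y : R, 0 < c -> 0 <= x -> 0 <= y -> Nf (c * x) (c * y) = c * Nf x y)
  (HNmono : forall x y x' y' : R, 0 <= x -> 0 <= y -> x <= x' -> y <= y' -> Nf x y <= Nf x' y')
  (HNlb : forall x y : R, 0 <= x -> 0 <= y -> x <= Nf x y)
  (a z1 z2 : R[i]) : cabs a < 1 -> cabs z1 < 1 -> cabs z2 < 1 ->
  (1 - cabs a) / (1 + cabs a) * sup (@S R Nf z1 z2) <= sup (@S R Nf (mobT a z1) (mobT a z2))
  /\ sup (@S R Nf (mobT a z1) (mobT a z2)) <= (1 + cabs a) / (1 - cabs a) * sup (@S R Nf z1 z2).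
Proof.
move=> ha h1 h2; split; first exact: (@main_ineq R Nf HNhom HNmono HNlb a z1 z2).
have ha' : cabs (- a) < 1 by rewrite cabsN.
have := @main_ineq R Nf HNhom HNmono HNlb _ _ _ ha' (mob_disk _ _ _ ha h1) (mob_disk _ _ _ ha h2).
rewrite !mob_inv // cabsN.
have h0 := @cabs_ge0 R a.
have hm : 0 < (1 - cabs a) / (1 + cabs a) by apply: divr_gt0; lra.
by rewrite -ler_pdivlMl // invf_div.
Qed.

Theorem theorem4p2 (R : realType) (p : \bar R) (a : R[i]) :
  (1%:E <= p)%E -> cabs a < 1 ->
  forall z1 z2 : R[i], cabs z1 < 1 -> cabs z2 < 1 ->
    (1 - cabs a) / (1 + cabs a) * bD p z1 z2 <= bD p (mobT a z1) (mobT a z2)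
    /\ bD p (mobT a z1) (mobT a z2) <= (1 + cabs a) / (1 - cabs a) * bD p z1 z2.
Proof.
move=> hp ha z1 z2 h1 h2.
case: p hp => [r| |] hp /=.
- have hr : 1 <= r by rewrite -lee_fin.
  have E : forall w1 w2 : R[i], @bD_fin R r w1 w2 = sup (@S R (@Npow R r) w1 w2) by [].
  rewrite !E.
  exact: (@final_gen R (@Npow R r) (fun c x y => @Npow_hom R r c x y hr)
    (fun x y x' y' => @Npow_mono R r x y x' y' hr) (fun x y => @Npow_lb R r x y hr)).
- have E : forall w1 w2 : R[i], @bD_inf R w1 w2 = sup (@S R (@Nmax R) w1 w2).
    move=> w1 w2; rewrite /bD_inf /S; congr sup; apply: eq_imagel => z _.
    by rewrite /F /Nmax (@cabsB R w2 z).
  rewrite !E.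
  exact: (@final_gen R (@Nmax R) (@Nmax_hom R) (@Nmax_mono R) (@Nmax_lb R)).
- by move: hp; rewrite leeNy_eq.
Qed.
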